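(* Let $m\ge2$ be an integer. There is a bijection $[\mathcal{A}_m]_m\to\mathcal{A}_m^m$, $\pi\mapsto(\lambda^{(1)},\ldots,\lambda^{(m)})$, such that $|\pi|=m\cdot(|\lambda^{(1)}|+\cdots+|\lambda^{(m)}|)$ and $\ell(\pi)=\ell(\lambda^{(1)})+\cdots+\ell(\lambda^{(m)})$. As a consequence, the numbers $a_m(n)$ defined by $\sum_{n\ge0}a_m(n)q^n=\prod_{k\ge0}(1+q^{m^k})^{m^k}$ form an $m$-convolutive sequence.
   Context: A colored $m$-ary strict partition is a finite set of parts, each part being a pair written $m^k_{c}$ with $k\ge0$ an integer and color $c\in\{1,\ldots,m^k\}$ (so no two parts share both the same size and the same color); the part $m^k_c$ has size $m^k$. The weight $|\pi|$ is the sum of the sizes of its parts and $\ell(\pi)$ is its number of parts. $\mathcal{A}_m$ denotes the set of colored $m$-ary strict partitions (including the empty one), and $[\mathcal{A}_m]_m$ the subset of those whose weight is divisible by $m$. A sequence $(a_n)_{n\ge0}$ is $m$-convolutive if $\sum_{n\ge0}a_{mn}q^n=\big(\sum_{n\ge0}a_nq^n\big)^m$. *)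

(* Defs.v *)
From HB Require Import structures.
From mathcomp Require Import all_boot all_order all_algebra.
From mathcomp Require Import finmap.
Set Implicit Arguments. Unset Strict Implicit. Unset Printing Implicit Defensive.
Import GRing.Theory.

Local Open Scope fset_scope.

(* A part m^k_c is encoded as the pair (k, c); a colored m-ary strict
   partition is a finite set of such pairs with 1 <= c <= m^k. *)
Definition valid_cpart (m : nat) (s : {fset (nat * nat)}) : bool :=
  all (fun x : nat * nat => (0 < x.2 <= m ^ x.1)%N) s.

Definition cpart (m : nat) := {s : {fset (nat * nat)} | valid_cpart m s}.

Definition cweight (m : nat) (p : cpart m) : nat :=
  (\sum_(x <- val p) m ^ x.1)%N.

Definition clength (m : nat) (p : cpart m) : nat := #|` val p|.

Definition cpart_divm (m : nat) := {p : cpart m | (m %| cweight p)%N}.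

Local Close Scope fset_scope.
Local Open Scope ring_scope.

(* a_m(n) = coefficient of q^n in prod_{k>=0} (1+q^{m^k})^{m^k}; for m >= 2
   only the factors with k <= n contribute to the coefficient of q^n
   (since m^k > k), so the product is truncated to k < n+1. *)
Definition am (m n : nat) : int :=
  (\prod_(k < n.+1) (1 + 'X^(m ^ k)) ^+ (m ^ k) : {poly int})`_n.

(* (a_n) is m-convolutive: sum_n a_{mn} q^n = (sum_n a_n q^n)^m, as formal
   power series, i.e. coefficientwise; the coefficient of q^n of the m-th
   power only depends on a_0..a_n. *)
Definition m_convolutive (m : nat) (a : nat -> int) : Prop :=
  forall n : nat,
    a (m * n)%N = ((\sum_(i < n.+1) a i *: 'X^i : {poly int}) ^+ m)`_n.

(* Main.v *)
Require Import Defs.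
From HB Require Import structures.
From mathcomp Require Import all_boot all_order all_algebra.
From mathcomp Require Import finmap.
From mathcomp Require Import zify.
Set Implicit Arguments. Unset Strict Implicit. Unset Printing Implicit Defensive.
Import GRing.Theory.

Section Comb.
Definition vp (m : nat) (x : nat * nat) : bool := (0 < x.2 <= m ^ x.1)%N.
Definition enc (m : nat) (i : nat) (y : nat*nat) : nat*nat := (y.1.+1, i * m ^ y.1 + y.2)%N.
Definition dec1 (m : nat) (x : nat*nat) : nat := (x.2.-1 %/ m ^ x.1.-1)%N.
Definition dec2 (m : nat) (x : nat*nat) : nat*nat := (x.1.-1, x.2.-1 %% m ^ x.1.-1 + 1)%N.

Lemma dec_enc m i y : vp m y -> dec1 m (enc m i y) = i /\ dec2 m (enc m i y) = y.
Proof.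
case: y => k c; rewrite /vp /= => /andP[c0 cM].
have M0 : (0 < m ^ k)%N by apply: leq_trans cM.
rewrite /dec1 /dec2 /enc /=.
have -> : ((i * m ^ k + c).-1 = i * m ^ k + c.-1)%N by lia.
rewrite divnMDl // divn_small ?addn0; last lia.
split=> //; rewrite modnMDl modn_small; last lia.
congr pair; lia.
Qed.

Lemma enc_dec m x : vp m x -> (0 < x.1)%N -> enc m (dec1 m x) (dec2 m x) = x.
Proof.
case: x => [[|k] c] //; rewrite /vp /enc /dec1 /dec2 /= => /andP[c0 cM] _.
congr pair; rewrite addnA -divn_eq; lia.
Qed.

Lemma dec1_lt m x : vp m x -> (0 < x.1)%N -> (dec1 m x < m)%N.
Proof.
case: x => [[|k] c] //; rewrite /vp /dec1 /= => /andP[c0 cM] _.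
have M0 : (0 < m ^ k)%N.
  rewrite expn_gt0; apply/orP; left; move: cM; rewrite expnS; case: m => //=; lia.
rewrite ltn_divLR //; rewrite expnS in cM; lia.
Qed.

Lemma dec2_valid m x : (0 < m)%N -> vp m (dec2 m x).
Proof.
move=> m0; rewrite /vp /dec2 /=.
have M0 : (0 < m ^ x.1.-1)%N by rewrite expn_gt0 m0.
have := ltn_pmod (x.2.-1) M0; lia.
Qed.

Lemma enc_valid m i y : (i < m)%N -> vp m y -> vp m (enc m i y).
Proof.
case: y => k c; rewrite /vp /enc /= expnS => im /andP[c0 cM].
apply/andP; split; first lia.
have : (i * m ^ k <= (m - 1) * m ^ k)%N by apply: leq_mul => //; lia.
rewrite mulnBl mul1n. have : (m ^ k <= m * m ^ k)%N by apply: leq_pmull; lia.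
lia.
Qed.

Local Open Scope fset_scope.

Definition gset m (l : m.-tuple (cpart m)) : {fset nat*nat} :=
  [fset enc m (nat_of_ord (i : 'I_m)) y | i : 'I_m, y in val (tnth l i)].

Lemma cpart_vp m (p : cpart m) y : y \in val p -> vp m y.
Proof. by case: p => s /= /allP H /H. Qed.

Lemma in_gset m (l : m.-tuple (cpart m)) x :
  reflect (exists i : 'I_m, exists2 y, y \in val (tnth l i) & x = enc m i y) (x \in gset l).
Proof.
apply: (iffP (imfset2P _ _ _ _ _)) => [[i _ [y yin ->]]|[i [y yin ->]]].
  by exists i, y.
by exists i => //; exists y.
Qed.

Lemma gset_inj m (l : m.-tuple (cpart m)) :
  {in [pred t | (tag t \in 'I_m) & (tagged t \in val (tnth l (tag t)))] &,
   injective (fun t : {_ : 'I_m & nat * nat} => enc m (tag t) (tagged t))}.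
Proof.
move=> [i y] [j z]; rewrite !inE /= => yin zin E.
have [e1 e2] := dec_enc i (cpart_vp yin).
have [f1 f2] := dec_enc j (cpart_vp zin).
have ij : i = j by apply: val_inj; rewrite /= -e1 -f1 E.
subst j; by rewrite -e2 -f2 E.
Qed.

Lemma gset_sum m (l : m.-tuple (cpart m)) (F : nat * nat -> nat) :
  (\sum_(x <- gset l) F x = \sum_(i < m) \sum_(y <- val (tnth l i)) F (enc m i y))%N.
Proof.
rewrite /gset big_imfset2 /=; last exact: gset_inj.
by rewrite big_enum.
Qed.

Lemma gset_valid m (l : m.-tuple (cpart m)) : valid_cpart m (gset l).
Proof.
apply/allP => x /in_gset [i [y yin ->]].
exact: (enc_valid (ltn_ord i) (cpart_vp yin)).
Qed.

Lemma gset_weight m (l : m.-tuple (cpart m)) :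
  (\sum_(x <- gset l) m ^ x.1 = m * \sum_(i < m) cweight (tnth l i))%N.
Proof.
rewrite gset_sum big_distrr /=; apply: eq_bigr => i _.
rewrite /cweight big_distrr /=; apply: eq_bigr => y _.
by rewrite expnS.
Qed.

Lemma gset_length m (l : m.-tuple (cpart m)) :
  (#|` gset l| = \sum_(i < m) clength (tnth l i))%N.
Proof.
rewrite -sum1_size gset_sum; apply: eq_bigr => i _.
by rewrite /clength -sum1_size.
Qed.

Lemma gset_div m (l : m.-tuple (cpart m)) :
  (m %| cweight (exist _ (gset l) (gset_valid l)))%N.
Proof. by rewrite /cweight /= gset_weight dvdn_mulr. Qed.

Definition gmap m (l : m.-tuple (cpart m)) : cpart_divm m :=
  exist _ (exist _ (gset l) (gset_valid l)) (gset_div l).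

Definition hset m (s : {fset nat*nat}) (i : nat) : {fset nat*nat} :=
  [fset dec2 m x | x in s & dec1 m x == i].

Lemma in_hset m s i y :
  reflect (exists2 x, (x \in s) && (dec1 m x == i) & y = dec2 m x) (y \in hset m s i).
Proof.
apply: (iffP (imfsetP _ _ _ _)) => [[x xin ->]|[x xin ->]]; by exists x.
Qed.

Lemma hset_valid m (m0 : (0 < m)%N) s i : valid_cpart m (hset m s i).
Proof.
apply/allP => y /in_hset [x _ ->]; exact: dec2_valid.
Qed.

Definition hmap m (m0 : (0 < m)%N) (pi : cpart_divm m) : m.-tuple (cpart m) :=
  [tuple exist _ (hset m (val (val pi)) i) (hset_valid m0 (val (val pi)) i) | i < m].

Lemma divm_pos m (m2 : (2 <= m)%N) (pi : cpart_divm m) x :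
  x \in val (val pi) -> (0 < x.1)%N.
Proof.
case: pi => [[s vs] /= dv] xin; rewrite lt0n; apply/negP => /eqP x10.
have vx := cpart_vp (p := exist _ s vs) xin.
move: dv; rewrite /cweight /= (big_fsetD1 x) //= x10 expn0.
rewrite dvdn_addl; first by rewrite dvdn1; lia.
rewrite big_seq; apply: dvdn_sum => z; rewrite !inE => /andP[zx zin].
have vz := cpart_vp (p := exist _ s vs) zin.
case: z zx zin vz => [[|k] c] zx zin vz.
  exfalso; move: zx vx vz; rewrite /vp x10 /=; case: x xin x10 => a b /= _ ->.
  rewrite expn0 => /eqP ne vb vc; apply: ne; congr pair; lia.
by rewrite /= expnS dvdn_mulr.
Qed.

Lemma ghK m (m2 : (2 <= m)%N) (pi : cpart_divm m) :
  gmap (hmap (leq_trans (isT : (0 < 2)%N) m2) pi) = pi.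
Proof.
set m0 := leq_trans _ _.
apply: val_inj; apply: val_inj => /=; apply/fsetP => x.
apply/in_gset/idP => [[i [y]]|xin].
  rewrite tnth_mktuple /= => /in_hset [z /andP[zin /eqP zi] ->] ->.
  rewrite -zi enc_dec //; [exact: cpart_vp zin | exact: divm_pos zin].
have vx := cpart_vp xin; have x1 := divm_pos m2 xin.
exists (Ordinal (dec1_lt vx x1)), (dec2 m x); last by rewrite enc_dec.
rewrite tnth_mktuple /=; apply/in_hset; exists x => //; by rewrite xin eqxx.
Qed.

Lemma hgK m (m0 : (0 < m)%N) (l : m.-tuple (cpart m)) :
  hmap m0 (gmap l) = l.
Proof.
apply: eq_from_tnth => i; rewrite tnth_mktuple; apply: val_inj => /=.
apply/fsetP => y; apply/in_hset/idP => [[x /andP[/in_gset [j [z zin ->]] /eqP ji] ->]|yin].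
  have [e1 e2] := dec_enc j (cpart_vp zin).
  rewrite e1 in ji; have -> : i = j by apply: val_inj.
  by rewrite e2.
have [e1 e2] := dec_enc i (cpart_vp yin).
exists (enc m i y); last by rewrite e2.
rewrite e1 eqxx andbT; apply/in_gset; by exists i, y.
Qed.
End Comb.

Section Pol.
Local Open Scope ring_scope.
Definition agree (n : nat) (p q : {poly int}) := forall j, (j <= n)%N -> p`_j = q`_j.

Lemma agreeM n p p' q q' : agree n p p' -> agree n q q' -> agree n (p * q) (p' * q').
Proof.
move=> hp hq j jn; rewrite !coefM; apply: eq_bigr => i _.
rewrite hp ?hq //; last exact: leq_trans (leq_ord i) jn.
exact: leq_trans (leq_subr _ _) jn.
Qed.

Lemma agreeX n p q k : agree n p q -> agree n (p ^+ k) (q ^+ k).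
Proof.
move=> h; elim: k => [|k IH]; first by move=> j _; rewrite !expr0.
by rewrite !exprS; apply: agreeM.
Qed.

Definition fac (m k : nat) : {poly int} := (1 + 'X^(m ^ k)) ^+ (m ^ k).
Definition PP (m N : nat) : {poly int} := \prod_(k < N) fac m k.

Lemma fac_agree m n k : (n < m ^ k)%N -> agree n (fac m k) 1.
Proof.
move=> nk; rewrite /fac; have := @agreeX n (1 + 'X^(m ^ k)) 1 (m ^ k).
rewrite expr1n; apply => j jn.
rewrite coefD coefXn; have -> : (j == (m ^ k)%N) = false by apply/negbTE; lia.
by rewrite addr0.
Qed.

Lemma PP_stable m n M : (1 < m)%N -> (n < M)%N -> (PP m M)`_n = am m n.
Proof.
move=> m1; elim: M => [|M IH] //; rewrite ltnS leq_eqVlt => /orP[/eqP->|nM] //.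
rewrite /PP big_ord_recr /= -/(PP m M) -IH //.
rewrite (@agreeM n _ (PP m M) _ 1) ?mulr1 //.
apply: fac_agree; apply: leq_trans nM _; exact: ltnW (ltn_expl _ m1).
Qed.

Lemma PP_rec m N : PP m N.+1 = (1 + 'X) * (PP m N \Po 'X^m) ^+ m.
Proof.
rewrite /PP big_ord_recl /= {1}/fac expn0 expr1 expr1.
congr (_ * _); rewrite rmorph_prod -prodrXl; apply: eq_bigr => i _.
rewrite /fac rmorphXn /= rmorphD /= rmorph1 comp_Xn_poly -exprM -exprM.
by rewrite /bump /= add1n expnS mulnC.
Qed.

Lemma conv m (m2 : (2 <= m)%N) : m_convolutive m (am m).
Proof.
move=> n.
have m0 : (0 < m)%N by lia.
rewrite -(@PP_stable m (m * n) (m * n).+2) // PP_rec -rmorphXn mulrDl mul1r coefD.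
rewrite coefXM !coef_comp_poly_Xn // dvdn_mulr // mulKn //.
have -> : (if (m * n == 0)%N then 0 else if (m %| (m * n).-1)%N then (PP m (m * n).+1 ^+ m)`_((m * n).-1 %/ m) else 0) = 0.
  case: eqP => // mn0; case: ifP => // dv.
  have : (m %| m * n - (m * n).-1)%N by apply: dvdn_sub; rewrite ?dvdn_mulr.
  have -> : (m * n - (m * n).-1 = 1)%N by lia.
  rewrite dvdn1; lia.
rewrite addr0; apply: (@agreeX n) (leqnn n) => j jn.
rewrite -poly_def coef_poly ltnS jn PP_stable //; nia.
Qed.
End Pol.

Theorem theorem5p2 (m : nat) (hm : (2 <= m)%N) :
  (exists f : cpart_divm m -> m.-tuple (cpart m),
      bijective f /\
      forall pi : cpart_divm m,
        cweight (val pi) = (m * \sum_(i < m) cweight (tnth (f pi) i))%N /\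
        clength (val pi) = (\sum_(i < m) clength (tnth (f pi) i))%N)
  /\ m_convolutive m (am m).
Proof.
split; last exact: conv.
set m0 := leq_trans (isT : (0 < 2)%N) hm.
exists (hmap m0); split.
  exists (@gmap m); [exact: ghK | exact: hgK].
move=> pi; rewrite -{1 3}(ghK hm pi) -/m0.
split; [exact: gset_weight | exact: gset_length].
Qed.
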